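(* Let $g(t)$, $t\in[0,T)$, be the maximal Ricci flow solution on $S^1\times S^3$ of the form $g(t)=\phi^2dz^2+a^2\omega^1\otimes\omega^1+b^2\omega^2\otimes\omega^2+c^2\omega^3\otimes\omega^3$. Suppose that $a\le b\le c\le\lambda a$ for some $1<\lambda<2$ at time $t=0$. Then for all $(s,t)\in S^1\times[0,T)$ there exist constants $C_1(\lambda),C_2(\lambda),C_3(\lambda)>0$ such that $$|a'(s,t)|\le C_1(\lambda)\le\max\left(\tfrac{280\sqrt3}{9},\max_s|a'(s,0)|\right),$$ $$|b'(s,t)|\le C_2(\lambda)\le\max\left(\tfrac{4\sqrt{57}}{3},\max_s|b'(s,0)|\right),$$ $$|c'(s,t)|\le C_3(\lambda)\le\max\left(\tfrac{10\sqrt{93}}{9},\max_s|c'(s,0)|\right).$$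
   Context: $S^3=SU(2)$ carries a global left-invariant frame $E_1,E_2,E_3$ with $[E_i,E_j]=-2\epsilon_{ijk}E_k$ and dual coframe $\omega^i$; $z\in S^1=[0,2\pi)$, $\phi,a,b,c$ positive smooth $2\pi$-periodic functions; $s$ is the arclength coordinate $ds=\phi\,dz$ and $'$ denotes $\partial_s$. The Ricci flow $\partial_tg=-2\mathrm{Ric}(g)$ preserves this form. *)

(* Defs.v *)
From Stdlib Require Import Reals Lra List.
From Coquelicot Require Import Coquelicot.
Open Scope R_scope.

(* Functions of (z,t) with z in R (2pi-periodic, i.e. on S^1) and t time. *)

Definition pz (f : R -> R -> R) : R -> R -> R :=
  fun z t => Derive (fun z' => f z' t) z.
Definition pt (f : R -> R -> R) : R -> R -> R :=
  fun z t => Derive (fun t' => f z t') t.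

Fixpoint iterD (l : list bool) (f : R -> R -> R) : R -> R -> R :=
  match l with
  | nil => f
  | true :: l' => pz (iterD l' f)
  | false :: l' => pt (iterD l' f)
  end.

(* C^infinity on a set P of R^2: all iterated partial derivatives exist and
   are jointly continuous at every point of P (P is taken open below). *)
Definition smooth_on (P : R -> R -> Prop) (f : R -> R -> R) : Prop :=
  forall (l : list bool) (z t : R), P z t ->
    ex_derive (fun z' => iterD l f z' t) z /\
    ex_derive (fun t' => iterD l f z t') t /\
    continuous (fun p : R * R => iterD l f (fst p) (snd p)) (z, t).

(* Arclength derivative ' = d/ds = (1/phi) d/dz. *)
Definition ds (phi f : R -> R -> R) : R -> R -> R :=
  fun z t => pz f z t / phi z t.
Definition dss (phi f : R -> R -> R) : R -> R -> R := ds phi (ds phi f).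

(* Ricci flow d/dt g = -2 Ric for g = phi^2 dz^2 + a^2 w1^2 + b^2 w2^2 + c^2 w3^2
   on S^1 x SU(2), [E_i,E_j] = -2 eps_ijk E_k, written in components
   (orthonormal frame d/ds, E1/a, E2/b, E3/c; off-diagonal Ricci vanishes):
     Ric(d_s,d_s) = -(a''/a + b''/b + c''/c)
     Ric(e1,e1)   = -a''/a - (a'/a)(b'/b + c'/c) + 2(a^4-(b^2-c^2)^2)/(a^2 b^2 c^2)
   and cyclically; hence phi_t = -phi Ric(d_s,d_s), a_t = -a Ric(e1,e1), ... *)
Definition RF_eqs (phi a b c : R -> R -> R) (z t : R) : Prop :=
  let a' := ds phi a z t in let b' := ds phi b z t in let c' := ds phi c z t in
  let A := a z t in let B := b z t in let C := c z t in
  pt phi z t = phi z t * (dss phi a z t / A + dss phi b z t / B + dss phi c z t / C) /\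
  pt a z t = dss phi a z t + a' * (b' / B + c' / C)
             - 2 * (A ^ 4 - (B ^ 2 - C ^ 2) ^ 2) / (A * B ^ 2 * C ^ 2) /\
  pt b z t = dss phi b z t + b' * (a' / A + c' / C)
             - 2 * (B ^ 4 - (A ^ 2 - C ^ 2) ^ 2) / (B * A ^ 2 * C ^ 2) /\
  pt c z t = dss phi c z t + c' * (a' / A + b' / B)
             - 2 * (C ^ 4 - (A ^ 2 - B ^ 2) ^ 2) / (C * A ^ 2 * B ^ 2).

Definition in_time (T : Rbar) (t : R) : Prop := 0 <= t /\ Rbar_lt (Finite t) T.

(* The functions are required smooth on R x (-eps, T) for some eps > 0
   (equivalently: smooth up to t = 0 on R x [0,T)); only their values on
   R x [0,T) matter. *)
Definition RF_solution (phi a b c : R -> R -> R) (T : Rbar) : Prop :=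
  Rbar_lt (Finite 0) T /\
  (exists eps, 0 < eps /\
     let P := fun (z t : R) => - eps < t /\ Rbar_lt (Finite t) T in
     smooth_on P phi /\ smooth_on P a /\ smooth_on P b /\ smooth_on P c) /\
  (forall z t, in_time T t ->
     phi (z + 2 * PI) t = phi z t /\ a (z + 2 * PI) t = a z t /\
     b (z + 2 * PI) t = b z t /\ c (z + 2 * PI) t = c z t) /\
  (forall z t, in_time T t ->
     0 < phi z t /\ 0 < a z t /\ 0 < b z t /\ 0 < c z t) /\
  (forall z t, in_time T t -> RF_eqs phi a b c z t).

Definition RF_maximal (phi a b c : R -> R -> R) (T : Rbar) : Prop :=
  RF_solution phi a b c T /\
  ~ (exists (T2 : Rbar) (phi2 a2 b2 c2 : R -> R -> R),
       Rbar_lt T T2 /\ RF_solution phi2 a2 b2 c2 T2 /\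
       forall z t, in_time T t ->
         phi2 z t = phi z t /\ a2 z t = a z t /\ b2 z t = b z t /\ c2 z t = c z t).

(* C <= max (K, max_s |f'(s,0)|)  (the max over s is attained by periodicity
   and continuity). *)
Definition le_max_init (C K : R) (phi f : R -> R -> R) : Prop :=
  C <= K \/ exists z0, C <= Rabs (ds phi f z0 0).

(* Main.v *)
Require Import Defs.
From Stdlib Require Import Reals.
From Coquelicot Require Import Coquelicot.
From Stdlib Require Import Lra Lia ZArith IndefiniteDescription Classical.
Open Scope R_scope.

Lemma c2d_pt1 (f : R -> R -> R) x y :
  continuity_2d_pt f x y -> continuity_pt (fun u => f u y) x.
Proof.
  intros Hc eps Heps.
  destruct (Hc (mkposreal eps Heps)) as [d Hd].
  exists d; split; [apply cond_pos|].
  intros u [_ Hu]. simpl in *. unfold R_dist in *.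
  apply Hd; auto. rewrite Rminus_diag, Rabs_R0. apply cond_pos.
Qed.

Lemma c2d_pt2 (f : R -> R -> R) x y :
  continuity_2d_pt f x y -> continuity_pt (fun v => f x v) y.
Proof.
  intros Hc eps Heps.
  destruct (Hc (mkposreal eps Heps)) as [d Hd].
  exists d; split; [apply cond_pos|].
  intros u [_ Hu]. simpl in *. unfold R_dist in *.
  apply Hd; auto. rewrite Rminus_diag, Rabs_R0. apply cond_pos.
Qed.

Definition clamp c d y := Rmax c (Rmin d y).

Lemma clamp_in c d y : c <= d -> c <= clamp c d y <= d.
Proof. intros; unfold clamp, Rmax, Rmin; repeat destruct Rle_dec; lra. Qed.
Lemma clamp_id c d y : c <= y <= d -> clamp c d y = y.
Proof. intros; unfold clamp, Rmax, Rmin; repeat destruct Rle_dec; lra. Qed.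
Lemma clamp_lip c d y y' : c <= d -> Rabs (clamp c d y - clamp c d y') <= Rabs (y - y').
Proof. intros; unfold clamp, Rmax, Rmin; repeat destruct Rle_dec;
  unfold Rabs; repeat destruct Rcase_abs; lra. Qed.

Lemma EVT2 (G : R -> R -> R) a b c d : a <= b -> c <= d ->
  (forall x y, a <= x <= b -> c <= y <= d -> continuity_2d_pt G x y) ->
  exists x0 y0, a <= x0 <= b /\ c <= y0 <= d /\
    forall x y, a <= x <= b -> c <= y <= d -> G x y <= G x0 y0.
Proof.
  intros Hab Hcd Hc.
  assert (Hmx : forall y, exists x, c <= y <= d ->
     a <= x <= b /\ forall x', a <= x' <= b -> G x' y <= G x y).
  { intro y. destruct (classic (c <= y <= d)) as [Hy|Hy].
    - destruct (continuity_ab_maj (fun x => G x y) a b Hab) as [M [HM1 HM2]].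
      + intros x Hx. apply c2d_pt1. auto.
      + exists M; auto.
    - exists a; intros; tauto. }
  set (mx := fun y => proj1_sig (constructive_indefinite_description _ (Hmx y))).
  assert (Hmxp : forall y, c <= y <= d ->
     a <= mx y <= b /\ forall x', a <= x' <= b -> G x' y <= G (mx y) y).
  { intros y Hy. unfold mx. destruct (constructive_indefinite_description _ (Hmx y)); simpl; auto. }
  set (m := fun y => G (mx (clamp c d y)) (clamp c d y)).
  assert (Hm : forall y0, continuity_pt m y0).
  { intros y0 eps Heps.
    destruct (uniform_continuity_2d G a b c d Hc (mkposreal (eps/2) ltac:(lra))) as [dl Hdl].
    exists dl; split; [apply cond_pos|].
    intros y [_ Hy]. simpl in *. unfold R_dist in *.
    pose proof (clamp_in c d y Hcd) as C1. pose proof (clamp_in c d y0 Hcd) as C2.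
    pose proof (clamp_lip c d y y0 Hcd) as L.
    set (y1 := clamp c d y) in *. set (y2 := clamp c d y0) in *.
    destruct (Hmxp y1 C1) as [I1 M1]. destruct (Hmxp y2 C2) as [I2 M2].
    unfold m; fold y1 y2.
    assert (A1 := Hdl (mx y2) y2 (mx y2) y1 I2 C2 I2 C1 ltac:(rewrite Rminus_diag, Rabs_R0; apply cond_pos) ltac:(lra)).
    assert (A2 := Hdl (mx y1) y1 (mx y1) y2 I1 C1 I1 C2 ltac:(rewrite Rminus_diag, Rabs_R0; apply cond_pos)
                   ltac:(rewrite Rabs_minus_sym; lra)).
    simpl in A1, A2.
    specialize (M1 (mx y2) I2). specialize (M2 (mx y1) I1).
    revert A1 A2; unfold Rabs; repeat destruct Rcase_abs; lra. }
  destruct (continuity_ab_maj m c d Hcd (fun y _ => Hm y)) as [ys [Hys1 Hys2]].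
  exists (mx ys), ys. destruct (Hmxp ys Hys2) as [I M].
  repeat split; try apply I; try apply Hys2.
  intros x y Hx Hy.
  specialize (Hys1 y Hy). unfold m in Hys1. rewrite !clamp_id in Hys1 by auto.
  destruct (Hmxp y Hy) as [_ My]. specialize (My x Hx). lra.
Qed.

Lemma per_nat (F : R -> R) : (forall z, F (z + 2*PI) = F z) ->
  forall n z, F (z + INR n * (2*PI)) = F z.
Proof.
  intros HP n; induction n; intro z.
  - simpl. f_equal; ring.
  - rewrite S_INR. replace (z + (INR n + 1) * (2 * PI)) with ((z + INR n * (2*PI)) + 2*PI) by ring.
    rewrite HP; auto.
Qed.

Lemma per_red (F : R -> R) : (forall z, F (z + 2*PI) = F z) ->
  forall z, exists x, 0 <= x <= 2*PI /\ F z = F x.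
Proof.
  intros HP z. pose proof PI_RGT_0 as Hpi.
  destruct (archimed (z / (2*PI))) as [H1 H2].
  set (k := (up (z / (2*PI)) - 1)%Z).
  assert (Hk1 : IZR k <= z / (2*PI)) by (unfold k; rewrite minus_IZR; simpl; lra).
  assert (Hk2 : z / (2*PI) < IZR k + 1) by (unfold k; rewrite minus_IZR; simpl; lra).
  exists (z - IZR k * (2*PI)).
  assert (E1 : IZR k * (2*PI) <= z).
  { apply Rmult_le_compat_r with (r := 2*PI) in Hk1; [|lra].
    unfold Rdiv in Hk1. rewrite Rmult_assoc, Rinv_l in Hk1 by lra. lra. }
  assert (E2 : z < (IZR k + 1) * (2*PI)).
  { apply Rmult_lt_compat_r with (r := 2*PI) in Hk2; [|lra].
    unfold Rdiv in Hk2. rewrite Rmult_assoc, Rinv_l in Hk2 by lra. lra. }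
  split; [lra|].
  destruct (Z_le_gt_dec 0 k) as [Hk|Hk].
  - destruct (IZN k Hk) as [n Hn]. rewrite Hn, <- INR_IZR_INZ.
    rewrite <- (per_nat F HP n (z - INR n * (2*PI))). f_equal; ring.
  - assert (Hk' : (0 <= - k)%Z) by lia.
    destruct (IZN _ Hk') as [n Hn].
    assert (IZR k = - INR n) by (rewrite INR_IZR_INZ, <- Hn, opp_IZR; ring).
    rewrite H. replace (z - - INR n * (2 * PI)) with (z + INR n * (2*PI)) by ring.
    rewrite per_nat; auto.
Qed.

Lemma MP (G : R -> R -> R) (t1 L : R) :
  0 <= t1 ->
  (forall x y, 0 <= x <= 2*PI -> 0 <= y <= t1 -> continuity_2d_pt G x y) ->
  (forall z y, 0 <= y <= t1 -> G (z + 2*PI) y = G z y) ->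
  (forall z, G z 0 <= L) ->
  (forall z t, 0 < t <= t1 -> L < G z t ->
     (forall z' s, 0 <= s <= t -> G z' s <= G z t) -> False) ->
  forall z, G z t1 <= L.
Proof.
  intros Ht1 Hc Hp H0 Hloc z.
  pose proof PI_RGT_0 as Hpi.
  destruct (EVT2 G 0 (2*PI) 0 t1 ltac:(lra) Ht1 Hc) as [x0 [y0 [Hx0 [Hy0 HM]]]].
  assert (Hall : forall z' s, 0 <= s <= t1 -> G z' s <= G x0 y0).
  { intros z' s Hs. destruct (per_red (fun u => G u s) (fun u => Hp u s Hs) z') as [x [Hx E]].
    simpl in E. rewrite E. apply HM; auto. }
  destruct (Rle_dec (G x0 y0) L) as [HL|HL].
  - specialize (Hall z t1 ltac:(lra)). lra.
  - exfalso. destruct (Req_dec y0 0) as [Hy|Hy].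
    + subst. specialize (H0 x0). lra.
    + apply (Hloc x0 y0); [lra|lra|]. intros z' s Hs. apply Hall. lra.
Qed.

Lemma deriv_pos (h : R -> R) z l : is_derive h z l -> 0 < l ->
  exists d, 0 < d /\ forall u, 0 < u < d -> h z < h (z + u) /\ h (z - u) < h z.
Proof.
  intros Hd Hl. apply is_derive_Reals in Hd.
  destruct (Hd (l/2) ltac:(lra)) as [dl Hdl].
  exists dl; split; [apply cond_pos|]. intros u Hu.
  assert (A1 := Hdl u ltac:(lra) ltac:(rewrite Rabs_pos_eq; lra)).
  assert (A2 := Hdl (-u) ltac:(lra) ltac:(rewrite Rabs_Ropp, Rabs_pos_eq; lra)).
  apply Rabs_def2 in A1. apply Rabs_def2 in A2.
  set (q1 := (h (z + u) - h z) / u) in *.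
  set (q2 := (h (z + - u) - h z) / - u) in *.
  assert (E1 : h (z+u) - h z = q1 * u) by (unfold q1; field; lra).
  assert (E2 : h (z + - u) - h z = q2 * - u) by (unfold q2; field; lra).
  replace (z - u) with (z + - u) by ring.
  split; nra.
Qed.

Lemma deriv_neg (h : R -> R) z l : is_derive h z l -> l < 0 ->
  exists d, 0 < d /\ forall u, 0 < u < d -> h (z + u) < h z /\ h z < h (z - u).
Proof.
  intros Hd Hl.
  assert (Hd' : is_derive (fun x => - h x) z (- l)) by (apply (is_derive_opp h); auto).
  destruct (deriv_pos _ _ _ Hd' ltac:(lra)) as [d [Hd0 Hu]].
  exists d; split; auto. intros u Hu'. specialize (Hu u Hu'). lra.
Qed.

Lemma tmax (g : R -> R) t l : 0 < t -> is_derive g t l ->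
  (forall s, 0 <= s <= t -> g s <= g t) -> 0 <= l.
Proof.
  intros Ht Hd Hm. destruct (Rle_dec 0 l) as [|Hl]; auto. exfalso.
  destruct (deriv_neg g t l Hd ltac:(lra)) as [d [Hd0 Hu]].
  set (u := Rmin d t / 2).
  assert (0 < u < d) by (unfold u, Rmin; destruct Rle_dec; lra).
  assert (0 <= t - u <= t) by (unfold u, Rmin; destruct Rle_dec; lra).
  specialize (Hu u H). specialize (Hm (t - u) H0). lra.
Qed.

Lemma max2 (h h1 h2 : R -> R) z :
  (forall x, is_derive h x (h1 x)) -> (forall x, is_derive h1 x (h2 x)) ->
  (forall x, h x <= h z) -> h1 z = 0 /\ h2 z <= 0.
Proof.
  intros D1 D2 Hm.
  assert (E : h1 z = 0).
  { destruct (Rtotal_order (h1 z) 0) as [Hl|[Hl|Hl]]; auto; exfalso.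
    - destruct (deriv_neg h z _ (D1 z) Hl) as [d [Hd Hu]].
      specialize (Hu (d/2) ltac:(lra)). specialize (Hm (z - d/2)). lra.
    - destruct (deriv_pos h z _ (D1 z) Hl) as [d [Hd Hu]].
      specialize (Hu (d/2) ltac:(lra)). specialize (Hm (z + d/2)). lra. }
  split; auto.
  destruct (Rle_dec (h2 z) 0) as [|Hl]; auto. exfalso.
  destruct (deriv_pos h1 z _ (D2 z) ltac:(lra)) as [d [Hd Hu]].
  rewrite E in Hu.
  assert (Hcont : forall x, continuity_pt h x).
  { intro x. apply continuity_pt_filterlim. apply (ex_derive_continuous h). eexists; apply D1. }
  set (u := d/2).
  destruct (MVT_gen h (z + u/2) (z + u) h1) as [c1 [Hc1 E1]].
  { intros; apply D1. } { intros; apply Hcont. }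
  destruct (MVT_gen h z (z + u/2) h1) as [c2 [Hc2 E2]].
  { intros; apply D1. } { intros; apply Hcont. }
  rewrite Rmin_left in Hc1, Hc2 by (unfold u; lra).
  rewrite Rmax_right in Hc1, Hc2 by (unfold u; lra).
  assert (P1 : 0 < h1 c1).
  { replace c1 with (z + (c1 - z)) by ring. apply Hu. unfold u in *; lra. }
  assert (P2 : 0 <= h1 c2).
  { destruct (Req_dec c2 z) as [->|Hne]; [lra|].
    replace c2 with (z + (c2 - z)) by ring. left; apply Hu. unfold u in *; lra. }
  specialize (Hm (z + u)).
  assert (0 < u) by (unfold u; lra).
  nra.
Qed.

Definition PS (eps : R) (T : Rbar) := fun (z t : R) => - eps < t /\ Rbar_lt (Finite t) T.

Lemma Rbar_above (t : R) (T : Rbar) : Rbar_lt t T -> exists d, t < d /\ Rbar_lt d T.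
Proof.
  destruct T as [r| |]; simpl; intros H.
  - exists ((t + r)/2); split; lra.
  - exists (t + 1); split; [lra|exact I].
  - contradiction.
Qed.

Lemma PS_open eps T z t : PS eps T z t ->
  exists d : posreal, forall u v, Rabs (v - t) < d -> PS eps T u v.
Proof.
  intros [H1 H2]. destruct (Rbar_above t T H2) as [d [Hd1 Hd2]].
  assert (Hp : 0 < Rmin (t + eps) (d - t)) by (apply Rmin_pos; lra).
  exists (mkposreal _ Hp). intros u v Hv. simpl in Hv.
  apply Rabs_def2 in Hv. pose proof (Rmin_l (t+eps) (d-t)). pose proof (Rmin_r (t+eps) (d-t)).
  split; [lra|]. apply Rbar_le_lt_trans with (Finite d); auto. simpl; lra.
Qed.

Lemma sm_c2d P f l z t : smooth_on P f -> P z t -> continuity_2d_pt (iterD l f) z t.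
Proof.
  intros Hs Hp. apply continuity_2d_pt_filterlim. apply (Hs l z t Hp).
Qed.

Lemma sm_dz P f l z t : smooth_on P f -> P z t -> ex_derive (fun z' => iterD l f z' t) z.
Proof. intros Hs Hp. apply (Hs l z t Hp). Qed.

Lemma sm_dt P f l z t : smooth_on P f -> P z t -> ex_derive (fun t' => iterD l f z t') t.
Proof. intros Hs Hp. apply (Hs l z t Hp). Qed.

Lemma mixed eps T f z t : smooth_on (PS eps T) f -> PS eps T z t ->
  pt (pz f) z t = pz (pt f) z t.
Proof.
  intros Hs Hp.
  symmetry.
  refine (Schwarz f z t _ _ _).
  - destruct (PS_open eps T z t Hp) as [d Hd].
    exists d. intros u v _ Hv. specialize (Hd u v Hv).
    split; [apply (sm_dz _ f nil u v Hs Hd)|].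
    split; [apply (sm_dt _ f nil u v Hs Hd)|].
    split; [apply (sm_dz _ f (false :: nil) u v Hs Hd)|].
    apply (sm_dt _ f (true :: nil) u v Hs Hd).
  - apply (sm_c2d _ f (true :: false :: nil) z t Hs Hp).
  - apply (sm_c2d _ f (false :: true :: nil) z t Hs Hp).
Qed.

Definition Fp (x y w : R) := (x^4 - (y^2 - w^2)^2) / (x * y^2 * w^2).

Definition EV (phi f g h : R -> R -> R) z t :=
  pt f z t = dss phi f z t + ds phi f z t * (ds phi g z t / g z t + ds phi h z t / h z t)
             - 2 * Fp (f z t) (g z t) (h z t).

Lemma Fp_sym x y w : Fp x y w = Fp x w y.
Proof. unfold Fp. f_equal; ring. Qed.

Lemma EVs phi a b c z t : 0 < a z t -> 0 < b z t -> 0 < c z t -> RF_eqs phi a b c z t ->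
  EV phi a b c z t /\ EV phi a c b z t /\ EV phi b a c z t /\ EV phi b c a z t /\
  EV phi c a b z t /\ EV phi c b a z t.
Proof.
  intros Ha Hb Hc (_ & Ea & Eb & Ec). unfold EV.
  assert (Fa : 2 * (a z t ^ 4 - (b z t ^ 2 - c z t ^ 2) ^ 2) / (a z t * b z t ^ 2 * c z t ^ 2)
            = 2 * Fp (a z t) (b z t) (c z t)) by (unfold Fp, Rdiv; ring).
  assert (Fb : 2 * (b z t ^ 4 - (a z t ^ 2 - c z t ^ 2) ^ 2) / (b z t * a z t ^ 2 * c z t ^ 2)
            = 2 * Fp (b z t) (a z t) (c z t)) by (unfold Fp, Rdiv; ring).
  assert (Fc : 2 * (c z t ^ 4 - (a z t ^ 2 - b z t ^ 2) ^ 2) / (c z t * a z t ^ 2 * b z t ^ 2)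
            = 2 * Fp (c z t) (a z t) (b z t)) by (unfold Fp, Rdiv; ring).
  rewrite Fa in Ea. rewrite Fb in Eb. rewrite Fc in Ec.
  rewrite (Fp_sym (a z t) (c z t) (b z t)), (Fp_sym (b z t) (c z t) (a z t)),
    (Fp_sym (c z t) (b z t) (a z t)).
  repeat split.
  - rewrite Ea; ring.
  - rewrite Ea; ring.
  - rewrite Eb; ring.
  - rewrite Eb; ring.
  - rewrite Ec; ring.
  - rewrite Ec; ring.
Qed.

Lemma pinch_alg (F G H ph P1 Q1 R1 P2 Q2 Ph1 ptf ptg : R) :
  0 < F -> 0 < G -> 0 < H -> 0 < ph -> G < F -> H <= F ->
  ptf = ((P2 * ph - P1 * Ph1) / ph^2) / ph + (P1 / ph) * ((Q1 / ph) / G + (R1 / ph) / H) - 2 * Fp F G H ->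
  ptg = ((Q2 * ph - Q1 * Ph1) / ph^2) / ph + (Q1 / ph) * ((P1 / ph) / F + (R1 / ph) / H) - 2 * Fp G F H ->
  P1 / F - Q1 / G = 0 ->
  (P2 * F - P1 * P1) / F^2 - (Q2 * G - Q1 * Q1) / G^2 <= 0 ->
  0 <= ptf / F - ptg / G -> False.
Proof.
  intros HF HG HH Hph HGF HHF Ef Eg H1 H2 Ht.
  set (h1 := P1 / F - Q1 / G) in *.
  set (h2 := (P2 * F - P1 * P1) / F^2 - (Q2 * G - Q1 * Q1) / G^2) in *.
  assert (Fpart : Fp F G H / F - Fp G F H / G = 2 * (F^2 - G^2) * (F^2 + G^2 - H^2) / (F^2 * G^2 * H^2)).
  { unfold Fp. field. lra. }
  assert (Id : ptf / F - ptg / G = h2 / ph^2 + h1 * ((P1/F + Q1/G)/ph^2 - Ph1/ph^3 + R1/(ph^2 * H))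
               - 2 * (Fp F G H / F - Fp G F H / G)).
  { rewrite Ef, Eg. unfold h1, h2. field. lra. }
  rewrite Id, Fpart, H1 in Ht.
  assert (0 < 2 * (F^2 - G^2) * (F^2 + G^2 - H^2) / (F^2 * G^2 * H^2)).
  { apply Rdiv_lt_0_compat; [|apply Rmult_lt_0_compat; [apply Rmult_lt_0_compat|]; apply pow_lt; lra].
    apply Rmult_lt_0_compat; [|nra]. nra. }
  assert (h2 / ph^2 <= 0).
  { unfold Rdiv. apply Rmult_le_0_r; auto. left. apply Rinv_0_lt_compat. apply pow_lt; lra. }
  lra.
Qed.

Lemma dz_is P f l z t : smooth_on P f -> P z t ->
  is_derive (fun z' => iterD l f z' t) z (pz (iterD l f) z t).
Proof. intros Hs Hp. apply Derive_correct. apply (sm_dz P f l z t Hs Hp). Qed.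

Lemma dt_is P f l z t : smooth_on P f -> P z t ->
  is_derive (fun t' => iterD l f z t') t (pt (iterD l f) z t).
Proof. intros Hs Hp. apply Derive_correct. apply (sm_dt P f l z t Hs Hp). Qed.

Lemma is_derive_ln_comp (f0 : R -> R) x d : is_derive f0 x d -> 0 < f0 x ->
  is_derive (fun y => ln (f0 y)) x (d / f0 x).
Proof.
  intros Hd Hp.
  pose proof (is_derive_comp ln f0 x (/ f0 x) d (is_derive_ln _ Hp) Hd) as H.
  exact H.
Qed.

Lemma dss_eq P phi f z t : smooth_on P phi -> smooth_on P f -> P z t -> phi z t <> 0 ->
  dss phi f z t = ((pz (pz f) z t * phi z t - pz f z t * pz phi z t) / (phi z t)^2) / phi z t.
Proof.
  intros Hph Hf Hp Hn. unfold dss. unfold ds at 1. f_equal.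
  unfold pz at 1. apply is_derive_unique.
  unfold ds.
  apply (is_derive_div (fun z' => pz f z' t) (fun z' => phi z' t)); auto.
  - exact (dz_is P f (true :: nil) z t Hf Hp).
  - exact (dz_is P phi nil z t Hph Hp).
Qed.

Lemma pinch_case eps T phi f g h (G : R -> R -> R) z t :
  smooth_on (PS eps T) phi -> smooth_on (PS eps T) f -> smooth_on (PS eps T) g ->
  0 < t -> PS eps T z t ->
  (forall z', 0 < phi z' t /\ 0 < f z' t /\ 0 < g z' t) -> 0 < h z t ->
  EV phi f g h z t -> EV phi g f h z t ->
  g z t < f z t -> h z t <= f z t ->
  (forall z' s, 0 <= s <= t -> ln (f z' s) - ln (g z' s) <= G z' s) ->
  G z t = ln (f z t) - ln (g z t) ->
  (forall z' s, 0 <= s <= t -> G z' s <= G z t) -> False.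
Proof.
  intros Sph Sf Sg Ht HP Hpos Hh Ef Eg Hgf Hhf Hle Heq Hmax.
  assert (HP' : forall z', PS eps T z' t) by (intro; apply HP).
  set (h0 := fun z' => ln (f z' t) - ln (g z' t)).
  set (h1 := fun z' => pz f z' t / f z' t - pz g z' t / g z' t).
  set (h2 := fun z' => (pz (pz f) z' t * f z' t - pz f z' t * pz f z' t) / (f z' t)^2
                     - (pz (pz g) z' t * g z' t - pz g z' t * pz g z' t) / (g z' t)^2).
  assert (D1 : forall x, is_derive h0 x (h1 x)).
  { intro x. destruct (Hpos x) as (_ & Pf & Pg). unfold h0, h1.
    apply (is_derive_minus (fun y => ln (f y t)) (fun y => ln (g y t))).
    - apply (is_derive_ln_comp (fun y => f y t)); auto.
      exact (dz_is _ f nil x t Sf (HP' x)).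
    - apply (is_derive_ln_comp (fun y => g y t)); auto.
      exact (dz_is _ g nil x t Sg (HP' x)). }
  assert (D2 : forall x, is_derive h1 x (h2 x)).
  { intro x. destruct (Hpos x) as (_ & Pf & Pg). unfold h1, h2.
    apply (is_derive_minus (fun y => pz f y t / f y t) (fun y => pz g y t / g y t)).
    - apply (is_derive_div (fun y => pz f y t) (fun y => f y t)); [| |lra].
      + exact (dz_is _ f (true :: nil) x t Sf (HP' x)).
      + exact (dz_is _ f nil x t Sf (HP' x)).
    - apply (is_derive_div (fun y => pz g y t) (fun y => g y t)); [| |lra].
      + exact (dz_is _ g (true :: nil) x t Sg (HP' x)).
      + exact (dz_is _ g nil x t Sg (HP' x)). }
  assert (M : forall x, h0 x <= h0 z).
  { intro x. unfold h0. rewrite <- Heq. eapply Rle_trans; [apply Hle; lra|]. apply Hmax; lra. }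
  destruct (max2 h0 h1 h2 z D1 D2 M) as [E1 E2].
  destruct (Hpos z) as (Pph & Pf & Pg).
  assert (Dt : is_derive (fun s => ln (f z s) - ln (g z s)) t (pt f z t / f z t - pt g z t / g z t)).
  { apply (is_derive_minus (fun y => ln (f z y)) (fun y => ln (g z y))).
    - apply (is_derive_ln_comp (fun y => f z y)); auto.
      exact (dt_is _ f nil z t Sf HP).
    - apply (is_derive_ln_comp (fun y => g z y)); auto.
      exact (dt_is _ g nil z t Sg HP). }
  assert (Tm := tmax _ t _ Ht Dt).
  assert (Tm' : 0 <= pt f z t / f z t - pt g z t / g z t).
  { apply Tm. intros s Hs. rewrite <- Heq. eapply Rle_trans; [apply Hle; lra|]. apply Hmax; lra. }
  unfold EV in Ef, Eg.
  rewrite (dss_eq _ phi f z t Sph Sf HP ltac:(lra)) in Ef.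
  rewrite (dss_eq _ phi g z t Sph Sg HP ltac:(lra)) in Eg.
  unfold ds in Ef, Eg.
  eapply (pinch_alg (f z t) (g z t) (h z t) (phi z t) (pz f z t) (pz g z t) (pz h z t)
            (pz (pz f) z t) (pz (pz g) z t) (pz phi z t) (pt f z t) (pt g z t)); eauto.
Qed.

Lemma Rmax_form x y : Rmax x y = (x + y + Rabs (x - y)) / 2.
Proof. unfold Rmax, Rabs; destruct Rle_dec; destruct Rcase_abs; lra. Qed.
Lemma Rmin_form x y : Rmin x y = (x + y - Rabs (x - y)) / 2.
Proof. unfold Rmin, Rabs; destruct Rle_dec; destruct Rcase_abs; lra. Qed.

Lemma c2d_abs (f : R -> R -> R) x y : continuity_2d_pt f x y ->
  continuity_2d_pt (fun u v => Rabs (f u v)) x y.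
Proof.
  intros H. apply (continuity_1d_2d_pt_comp Rabs f); auto.
  apply continuity_pt_filterlim. apply continuous_Rabs.
Qed.

Lemma c2d_half (f : R -> R -> R) x y : continuity_2d_pt f x y ->
  continuity_2d_pt (fun u v => f u v / 2) x y.
Proof.
  intros H. apply (continuity_2d_pt_mult f (fun _ _ => / 2)); auto.
  apply continuity_2d_pt_const.
Qed.

Lemma c2d_max (f g : R -> R -> R) x y : continuity_2d_pt f x y -> continuity_2d_pt g x y ->
  continuity_2d_pt (fun u v => Rmax (f u v) (g u v)) x y.
Proof.
  intros Hf Hg.
  apply continuity_2d_pt_ext with (fun u v => (f u v + g u v + Rabs (f u v - g u v)) / 2).
  { intros; rewrite Rmax_form; auto. }
  apply c2d_half. apply continuity_2d_pt_plus; [apply continuity_2d_pt_plus; auto|].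
  apply c2d_abs. apply continuity_2d_pt_minus; auto.
Qed.

Lemma c2d_min (f g : R -> R -> R) x y : continuity_2d_pt f x y -> continuity_2d_pt g x y ->
  continuity_2d_pt (fun u v => Rmin (f u v) (g u v)) x y.
Proof.
  intros Hf Hg.
  apply continuity_2d_pt_ext with (fun u v => (f u v + g u v - Rabs (f u v - g u v)) / 2).
  { intros; rewrite Rmin_form; auto. }
  apply c2d_half. apply continuity_2d_pt_minus; [apply continuity_2d_pt_plus; auto|].
  apply c2d_abs. apply continuity_2d_pt_minus; auto.
Qed.

Lemma c2d_ln (f : R -> R -> R) x y : continuity_2d_pt f x y -> 0 < f x y ->
  continuity_2d_pt (fun u v => ln (f u v)) x y.
Proof.
  intros H Hp. apply (continuity_1d_2d_pt_comp ln f); auto.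
  apply continuity_pt_filterlim. apply continuous_ln; auto.
Qed.

Definition M3 (a b c : R -> R -> R) z t := Rmax (a z t) (Rmax (b z t) (c z t)).
Definition m3 (a b c : R -> R -> R) z t := Rmin (a z t) (Rmin (b z t) (c z t)).

Lemma max3_cases A B C : Rmax A (Rmax B C) = A \/ Rmax A (Rmax B C) = B \/ Rmax A (Rmax B C) = C.
Proof. unfold Rmax; repeat destruct Rle_dec; auto. Qed.
Lemma min3_cases A B C : Rmin A (Rmin B C) = A \/ Rmin A (Rmin B C) = B \/ Rmin A (Rmin B C) = C.
Proof. unfold Rmin; repeat destruct Rle_dec; auto. Qed.

Lemma ln_ratio_le A B C x y : 0 < A -> 0 < B -> 0 < C ->
  (x = A \/ x = B \/ x = C) -> (y = A \/ y = B \/ y = C) ->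
  ln x - ln y <= ln (Rmax A (Rmax B C)) - ln (Rmin A (Rmin B C)).
Proof.
  intros HA HB HC Hx Hy.
  assert (x <= Rmax A (Rmax B C)).
  { destruct Hx as [ -> | [ -> | -> ] ]; unfold Rmax; repeat destruct Rle_dec; lra. }
  assert (Rmin A (Rmin B C) <= y).
  { destruct Hy as [ -> | [ -> | -> ] ]; unfold Rmin; repeat destruct Rle_dec; lra. }
  assert (0 < Rmin A (Rmin B C)) by (unfold Rmin; repeat destruct Rle_dec; lra).
  assert (0 < x) by (destruct Hx as [ -> | [ -> | -> ] ]; lra).
  assert (ln x <= ln (Rmax A (Rmax B C))) by (apply ln_le; auto).
  assert (ln (Rmin A (Rmin B C)) <= ln y) by (apply ln_le; auto).
  lra.
Qed.

Lemma in_time_PS eps T t : 0 < eps -> in_time T t -> forall z, PS eps T z t.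
Proof. intros He [H1 H2] z. split; auto; lra. Qed.

Lemma in_time_le T t s : in_time T t -> 0 <= s <= t -> in_time T s.
Proof.
  intros [H1 H2] Hs. split; [lra|]. apply Rbar_le_lt_trans with (Finite t); auto. simpl; lra.
Qed.

Lemma pinching eps T phi a b c lam :
  0 < eps ->
  smooth_on (PS eps T) phi -> smooth_on (PS eps T) a ->
  smooth_on (PS eps T) b -> smooth_on (PS eps T) c ->
  (forall z t, in_time T t ->
     phi (z + 2 * PI) t = phi z t /\ a (z + 2 * PI) t = a z t /\
     b (z + 2 * PI) t = b z t /\ c (z + 2 * PI) t = c z t) ->
  (forall z t, in_time T t -> 0 < phi z t /\ 0 < a z t /\ 0 < b z t /\ 0 < c z t) ->
  (forall z t, in_time T t -> RF_eqs phi a b c z t) ->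
  1 < lam ->
  (forall z, a z 0 <= b z 0 /\ b z 0 <= c z 0 /\ c z 0 <= lam * a z 0) ->
  forall z t, in_time T t -> M3 a b c z t <= lam * m3 a b c z t.
Proof.
  intros He Sph Sa Sb Sc Hper Hpos Heq Hlam H0 z t Ht.
  set (G := fun z s => ln (M3 a b c z s) - ln (m3 a b c z s)).
  assert (Hlnl : 0 < ln lam) by (rewrite <- ln_1; apply ln_increasing; lra).
  assert (PM : forall z s, in_time T s -> 0 < M3 a b c z s /\ 0 < m3 a b c z s).
  { intros z' s Hs. destruct (Hpos z' s Hs) as (_ & Pa & Pb & Pc).
    unfold M3, m3, Rmax, Rmin; repeat destruct Rle_dec; lra. }
  assert (HG : G z t <= ln lam).
  { apply (MP G t (ln lam)); [apply Ht| | | |].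
    - intros x y Hx Hy. assert (Hy' : in_time T y) by (apply (in_time_le T t); auto).
      pose proof (in_time_PS eps T y He Hy' x) as HP. destruct (PM x y Hy').
      unfold G, M3, m3. apply continuity_2d_pt_minus; apply c2d_ln; auto.
      + apply c2d_max; [|apply c2d_max]; apply (sm_c2d (PS eps T) _ nil x y); auto.
      + apply c2d_min; [|apply c2d_min]; apply (sm_c2d (PS eps T) _ nil x y); auto.
    - intros z' y Hy. assert (Hy' : in_time T y) by (apply (in_time_le T t); auto).
      destruct (Hper z' y Hy') as (_ & Ea & Eb & Ec). unfold G, M3, m3. rewrite Ea, Eb, Ec; auto.
    - intros z'. destruct (H0 z') as (I1 & I2 & I3).
      assert (H00 : in_time T 0) by (apply (in_time_le T t); auto; split; [lra|apply Ht]).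
      destruct (Hpos z' 0 H00) as (_ & Pa & Pb & Pc).
      unfold G, M3, m3.
      assert (E1 : Rmax (a z' 0) (Rmax (b z' 0) (c z' 0)) = c z' 0)
        by (unfold Rmax; repeat destruct Rle_dec; lra).
      assert (E2 : Rmin (a z' 0) (Rmin (b z' 0) (c z' 0)) = a z' 0)
        by (unfold Rmin; repeat destruct Rle_dec; lra).
      rewrite E1, E2.
      assert (ln (c z' 0) <= ln (lam * a z' 0)) by (apply ln_le; lra).
      rewrite ln_mult in H by lra. lra.
    - intros z' t' Ht' HL Hmax.
      assert (Hin : in_time T t') by (apply (in_time_le T t); auto; lra).
      pose proof (in_time_PS eps T t' He Hin) as HP.
      destruct (Hpos z' t' Hin) as (Pph & Pa & Pb & Pc).
      destruct (EVs phi a b c z' t' Pa Pb Pc (Heq z' t' Hin)) as (E1 & E2 & E3 & E4 & E5 & E6).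
      assert (Hposs : forall f, (f = a \/ f = b \/ f = c) -> forall z'',
         0 < phi z'' t' /\ 0 < f z'' t').
      { intros f Hf z''. destruct (Hpos z'' t' Hin) as (? & ? & ? & ?).
        destruct Hf as [ -> | [ -> | -> ] ]; auto. }
      assert (Hle : forall (f g : R -> R -> R), (f = a \/ f = b \/ f = c) -> (g = a \/ g = b \/ g = c) ->
         forall z'' s, 0 <= s <= t' -> ln (f z'' s) - ln (g z'' s) <= G z'' s).
      { intros f g Hf Hg z'' s Hs.
        assert (Hs' : in_time T s) by (apply (in_time_le T t'); auto).
        destruct (Hpos z'' s Hs') as (_ & Qa & Qb & Qc). unfold G, M3, m3.
        apply ln_ratio_le; auto.
        - destruct Hf as [ -> | [ -> | -> ] ]; auto.
        - destruct Hg as [ -> | [ -> | -> ] ]; auto. }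
      assert (HM1 : a z' t' <= M3 a b c z' t' /\ b z' t' <= M3 a b c z' t' /\ c z' t' <= M3 a b c z' t')
        by (unfold M3, Rmax; repeat destruct Rle_dec; lra).
      assert (Hlt : forall x y, 0 < x -> 0 < y -> 0 < ln x - ln y -> y < x).
      { intros x y Hx Hy Hl. destruct (Rlt_or_le y x); auto.
        assert (ln x <= ln y) by (apply ln_le; auto). lra. }
      unfold G in HL, Hmax.
      destruct (max3_cases (a z' t') (b z' t') (c z' t')) as [Mx|[Mx|Mx]];
      destruct (min3_cases (a z' t') (b z' t') (c z' t')) as [mn|[mn|mn]];
      fold (M3 a b c z' t') in Mx; fold (m3 a b c z' t') in mn;
      rewrite Mx, mn in HL; try lra.
      + refine (pinch_case eps T phi a b c G z' t' _ _ _ _ _ _ _ _ _ _ _ _ _ _);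
        first [ assumption | exact Hmax | apply HP | (let zz := fresh in intros zz; destruct (Hpos zz t' Hin) as (? & ? & ? & ?); repeat split; auto; fail)
              | (apply Hlt; auto; lra) | lra | (apply Hle; auto; fail)
              | (unfold G; rewrite Mx, mn; auto; fail) ].
      + refine (pinch_case eps T phi a c b G z' t' _ _ _ _ _ _ _ _ _ _ _ _ _ _);
        first [ assumption | exact Hmax | apply HP | (let zz := fresh in intros zz; destruct (Hpos zz t' Hin) as (? & ? & ? & ?); repeat split; auto; fail)
              | (apply Hlt; auto; lra) | lra | (apply Hle; auto; fail)
              | (unfold G; rewrite Mx, mn; auto; fail) ].
      + refine (pinch_case eps T phi b a c G z' t' _ _ _ _ _ _ _ _ _ _ _ _ _ _);
        first [ assumption | exact Hmax | apply HP | (let zz := fresh in intros zz; destruct (Hpos zz t' Hin) as (? & ? & ? & ?); repeat split; auto; fail)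
              | (apply Hlt; auto; lra) | lra | (apply Hle; auto; fail)
              | (unfold G; rewrite Mx, mn; auto; fail) ].
      + refine (pinch_case eps T phi b c a G z' t' _ _ _ _ _ _ _ _ _ _ _ _ _ _);
        first [ assumption | exact Hmax | apply HP | (let zz := fresh in intros zz; destruct (Hpos zz t' Hin) as (? & ? & ? & ?); repeat split; auto; fail)
              | (apply Hlt; auto; lra) | lra | (apply Hle; auto; fail)
              | (unfold G; rewrite Mx, mn; auto; fail) ].
      + refine (pinch_case eps T phi c a b G z' t' _ _ _ _ _ _ _ _ _ _ _ _ _ _);
        first [ assumption | exact Hmax | apply HP | (let zz := fresh in intros zz; destruct (Hpos zz t' Hin) as (? & ? & ? & ?); repeat split; auto; fail)
              | (apply Hlt; auto; lra) | lra | (apply Hle; auto; fail)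
              | (unfold G; rewrite Mx, mn; auto; fail) ].
      + refine (pinch_case eps T phi c b a G z' t' _ _ _ _ _ _ _ _ _ _ _ _ _ _);
        first [ assumption | exact Hmax | apply HP | (let zz := fresh in intros zz; destruct (Hpos zz t' Hin) as (? & ? & ? & ?); repeat split; auto; fail)
              | (apply Hlt; auto; lra) | lra | (apply Hle; auto; fail)
              | (unfold G; rewrite Mx, mn; auto; fail) ]. }
  destruct (PM z t Ht) as [P1 P2].
  unfold G in HG.
  destruct (Rle_or_lt (M3 a b c z t) (lam * m3 a b c z t)) as [|Hc]; auto.
  assert (ln (lam * m3 a b c z t) < ln (M3 a b c z t)) by (apply ln_increasing; auto; nra).
  rewrite ln_mult in H by lra. lra.
Qed.

Definition dFx x y w := (3 * x^4 + (y^2 - w^2)^2) / (x^2 * y^2 * w^2).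
Definition dFy x y w := (- 2 * x^4 - 2 * y^4 + 2 * w^4) / (x * y^3 * w^2).
Definition dFw x y w := (- 2 * x^4 - 2 * w^4 + 2 * y^4) / (x * y^2 * w^3).

Definition Qg F G H X Y W :=
  X * (Y^2 / G^2 + W^2 / H^2) + 2 * (dFx F G H * X + dFy F G H * Y + dFw F G H * W).

Lemma poly_ineq p q r : 0 < p -> 0 < q -> 0 < r -> p < 4*q -> q < 4*p -> p < 4*r -> r < 4*p ->
  q < 4*r -> r < 4*q ->
  p^4 + (q - r)^2 * (q + r)^2 <= 25 * (3 * p^2 + (q - r)^2) * (q * r).
Proof.
  intros Hp Hq Hr H1 H2 H3 H4 H5 H6.
  assert (A : p^2 <= 75 * (q * r)).
  { assert (p * p < 16 * (q * r)) by nra. nra. }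
  assert (B : (q + r)^2 <= 25 * (q * r)).
  { assert (0 < (4*r - q) * (4*q - r)) by nra. nra. }
  assert (C : p^4 <= 75 * p^2 * (q * r)).
  { replace (p^4) with (p^2 * p^2) by ring. assert (0 <= p^2) by nra. nra. }
  assert (D : (q - r)^2 * (q + r)^2 <= (q - r)^2 * (25 * (q * r))).
  { apply Rmult_le_compat_l; [apply pow2_ge_0|auto]. }
  nra.
Qed.

Lemma grad_ineq F G H X Y W : 0 < F -> 0 < G -> 0 < H ->
  F < 2*G -> G < 2*F -> F < 2*H -> H < 2*F -> G < 2*H -> H < 2*G ->
  10 < X -> 0 < Qg F G H X Y W.
Proof.
  intros HF HG HH R1 R2 R3 R4 R5 R6 HX.
  set (D := G^2 * H^2).
  set (A := 3 * F^4 + (G^2 - H^2)^2).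
  set (B := - 2 * F^4 - 2 * G^4 + 2 * H^4).
  set (C := - 2 * F^4 - 2 * H^4 + 2 * G^4).
  set (u := F * Y / G). set (v := F * W / H).
  assert (HD : 0 < D) by (unfold D; apply Rmult_lt_0_compat; apply pow_lt; lra).
  assert (Id : Qg F G H X Y W * F^2 = (X * (u^2 + v^2) + 2 * (A/D * X + B/D * u + C/D * v))).
  { unfold Qg, dFx, dFy, dFw, u, v, A, B, C, D. field. lra. }
  assert (HA : 0 < A) by (unfold A; assert (0 < F^4) by (apply pow_lt; lra); pose proof (pow2_ge_0 (G^2 - H^2)); lra).
  assert (Key : B^2 + C^2 <= 200 * A * D).
  { pose proof (poly_ineq (F^2) (G^2) (H^2)) as P.
    assert (E1 : B^2 + C^2 = 8 * ((F^2)^4 + (G^2 - H^2)^2 * (G^2 + H^2)^2)) by (unfold B, C; ring).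
    assert (E2 : 200 * A * D = 8 * (25 * (3 * (F^2)^2 + (G^2 - H^2)^2) * (G^2 * H^2))) by (unfold A, D; ring).
    rewrite E1, E2. apply Rmult_le_compat_l; [lra|].
    apply P; try (apply pow_lt; lra); nra. }
  set (a := A / D). set (b := B / D). set (c := C / D).
  assert (Ha : 0 < a) by (unfold a; apply Rdiv_lt_0_compat; auto).
  assert (Key' : b^2 + c^2 <= 200 * a).
  { unfold a, b, c. replace ((B/D)^2 + (C/D)^2) with ((B^2 + C^2) / D^2) by (field; lra).
    replace (200 * (A / D)) with ((200 * A * D) / D^2) by (field; lra).
    unfold Rdiv. apply Rmult_le_compat_r; auto. left; apply Rinv_0_lt_compat, pow_lt; auto. }
  assert (Pos : 0 < X * (X * (u^2 + v^2) + 2 * (a * X + b * u + c * v))).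
  { pose proof (pow2_ge_0 (X * u + b)). pose proof (pow2_ge_0 (X * v + c)).
    assert (X^2 > 100) by nra.
    assert (a * (X^2 - 100) > 0) by (apply Rmult_lt_0_compat; lra).
    replace (X * (X * (u^2 + v^2) + 2 * (a * X + b * u + c * v))) with
      ((X * u + b)^2 + (X * v + c)^2 - (b^2 + c^2) + 2 * a * X^2) by ring.
    nra. }
  assert (0 < X * (u^2 + v^2) + 2 * (a * X + b * u + c * v)).
  { destruct (Rlt_or_le 0 (X * (u^2 + v^2) + 2 * (a * X + b * u + c * v))); auto. nra. }
  fold a b c in Id. rewrite <- Id in H0.
  assert (0 < F^2) by (apply pow_lt; lra). nra.
Qed.

Definition DRf F G H ph P1 P2 P3 Q1 Q2 R1 R2 Ph1 Ph2 :=
  let Xd := (P2 * ph - P1 * Ph1) / ph^2 in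
  let Xdd := ((P3 * ph - P1 * Ph2) * ph^2 - (P2 * ph - P1 * Ph1) * (2 * ph * Ph1)) / ph^4 in
  (Xdd * ph - Xd * Ph1) / ph^2 + Xd * ((Q1 / ph) / G + (R1 / ph) / H)
  + (P1 / ph) * ((((Q2 * ph - Q1 * Ph1) / ph^2) * G - (Q1 / ph) * Q1) / G^2
               + (((R2 * ph - R1 * Ph1) / ph^2) * H - (R1 / ph) * R1) / H^2)
  - 2 * (dFx F G H * P1 + dFy F G H * Q1 + dFw F G H * R1).

Lemma Qg_odd F G H X Y W : Qg F G H (-X) (-Y) (-W) = - Qg F G H X Y W.
Proof. unfold Qg, Rdiv. ring. Qed.

Lemma grad_final sg F G H ph P1 P2 P3 Q1 Q2 R1 R2 Ph1 Ph2 ptph :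
  (sg = 1 \/ sg = -1) -> 0 < F -> 0 < G -> 0 < H -> 0 < ph ->
  F < 2*G -> G < 2*F -> F < 2*H -> H < 2*F -> G < 2*H -> H < 2*G ->
  (P2 * ph - P1 * Ph1) / ph^2 = 0 ->
  sg * (((P3 * ph - P1 * Ph2) * ph^2 - (P2 * ph - P1 * Ph1) * (2 * ph * Ph1)) / ph^4) <= 0 ->
  ptph = ph * ((((P2 * ph - P1 * Ph1) / ph^2) / ph) / F + (((Q2 * ph - Q1 * Ph1) / ph^2) / ph) / G
               + (((R2 * ph - R1 * Ph1) / ph^2) / ph) / H) ->
  0 <= sg * ((DRf F G H ph P1 P2 P3 Q1 Q2 R1 R2 Ph1 Ph2 * ph - P1 * ptph) / ph^2) ->
  10 < sg * (P1 / ph) -> False.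
Proof.
  intros Hsg HF HG HH Hph r1 r2 r3 r4 r5 r6 HXd HXdd Hpt Htm HX.
  assert (HP2 : P2 = P1 * Ph1 / ph).
  { assert (P2 * ph - P1 * Ph1 = 0).
    { apply (Rmult_eq_reg_r (/ ph^2)); [|apply Rinv_neq_0_compat; apply pow_nonzero; lra].
      rewrite Rmult_0_l. exact HXd. }
    field_simplify_eq; lra. }
  subst P2. subst ptph.
  set (Xdd := ((P3 * ph - P1 * Ph2) * ph^2 - (P1 * Ph1 / ph * ph - P1 * Ph1) * (2 * ph * Ph1)) / ph^4) in *.
  assert (Id : (DRf F G H ph P1 (P1 * Ph1 / ph) P3 Q1 Q2 R1 R2 Ph1 Ph2 * ph -
      P1 * (ph * ((((P1 * Ph1 / ph) * ph - P1 * Ph1) / ph^2 / ph) / F + (((Q2 * ph - Q1 * Ph1) / ph^2) / ph) / G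
               + (((R2 * ph - R1 * Ph1) / ph^2) / ph) / H))) / ph^2
    = Xdd / ph^2 - Qg F G H (P1 / ph) (Q1 / ph) (R1 / ph)).
  { unfold DRf, Qg, Xdd. field. lra. }
  rewrite Id in Htm.
  assert (HQ : 0 < sg * Qg F G H (P1 / ph) (Q1 / ph) (R1 / ph)).
  { destruct Hsg as [->| ->].
    - rewrite Rmult_1_l. apply grad_ineq; auto. lra.
    - replace (-1 * Qg F G H (P1 / ph) (Q1 / ph) (R1 / ph))
        with (Qg F G H (- (P1 / ph)) (- (Q1 / ph)) (- (R1 / ph))) by (rewrite Qg_odd; ring).
      apply grad_ineq; auto. lra. }
  assert (sg * (Xdd / ph^2) <= 0).
  { replace (sg * (Xdd / ph^2)) with ((sg * Xdd) * / ph^2) by (unfold Rdiv; ring).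
    apply Rmult_le_0_r; auto. left; apply Rinv_0_lt_compat, pow_lt; lra. }
  lra.
Qed.

Lemma grad_local eps T phi f g h z t sg :
  (sg = 1 \/ sg = -1) ->
  smooth_on (PS eps T) phi -> smooth_on (PS eps T) f ->
  smooth_on (PS eps T) g -> smooth_on (PS eps T) h ->
  0 < t -> (forall z', PS eps T z' t) ->
  (forall z', 0 < phi z' t /\ 0 < f z' t /\ 0 < g z' t /\ 0 < h z' t) ->
  (forall z', EV phi f g h z' t) ->
  pt phi z t = phi z t * (dss phi f z t / f z t + dss phi g z t / g z t + dss phi h z t / h z t) ->
  f z t < 2 * g z t -> g z t < 2 * f z t -> f z t < 2 * h z t -> h z t < 2 * f z t ->
  g z t < 2 * h z t -> h z t < 2 * g z t ->
  10 < sg * ds phi f z t ->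
  (forall z', sg * ds phi f z' t <= sg * ds phi f z t) ->
  (forall s, 0 <= s <= t -> sg * ds phi f z s <= sg * ds phi f z t) -> False.
Proof.
  intros Hsg Sph Sf Sg Sh Ht HP Hpos Hev Hphi R1 R2 R3 R4 R5 R6 HX Hsp Htm.
  set (X := fun z' => pz f z' t / phi z' t).
  set (Xd := fun z' => (pz (pz f) z' t * phi z' t - pz f z' t * pz phi z' t) / (phi z' t)^2).
  set (Xdd := fun z' => ((pz (pz (pz f)) z' t * phi z' t - pz f z' t * pz (pz phi) z' t) * (phi z' t)^2
                     - (pz (pz f) z' t * phi z' t - pz f z' t * pz phi z' t) * (2 * phi z' t * pz phi z' t))
                     / (phi z' t)^4).
  assert (DX : forall x, is_derive X x (Xd x)).
  { intro x. destruct (Hpos x) as (P0 & _). unfold X, Xd.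
    apply (is_derive_div (fun y => pz f y t) (fun y => phi y t)); [| |lra].
    - exact (dz_is _ f (true :: nil) x t Sf (HP x)).
    - exact (dz_is _ phi nil x t Sph (HP x)). }
  assert (DXd : forall x, is_derive Xd x (Xdd x)).
  { intro x. destruct (Hpos x) as (P0 & _). unfold Xd, Xdd.
    pose proof (dz_is _ f (true :: true :: nil) x t Sf (HP x)) as D3.
    pose proof (dz_is _ f (true :: nil) x t Sf (HP x)) as D2.
    pose proof (dz_is _ phi (true :: nil) x t Sph (HP x)) as E2.
    pose proof (dz_is _ phi nil x t Sph (HP x)) as E1.
    simpl in D3, D2, E2, E1.
    auto_derive.
    - repeat split; try (eexists; eassumption). repeat apply Rmult_integral_contrapositive_currified; lra.
    - rewrite (is_derive_unique _ _ _ D3), (is_derive_unique _ _ _ D2),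
        (is_derive_unique _ _ _ E2), (is_derive_unique _ _ _ E1).
      field. lra. }
  destruct (Hpos z) as (Pph & Pf & Pg & Ph).
  assert (Hsg0 : sg <> 0) by (destruct Hsg; lra).
  destruct (max2 (fun z' => sg * X z') (fun z' => sg * Xd z') (fun z' => sg * Xdd z') z)
    as [E1 E2].
  { intro x. apply is_derive_scal. apply DX. }
  { intro x. apply is_derive_scal. apply DXd. }
  { intro x. apply Hsp. }
  assert (E1' : Xd z = 0).
  { apply (Rmult_eq_reg_l sg); auto. rewrite Rmult_0_r; exact E1. }
  assert (Dt : is_derive (fun s => sg * (pz f z s / phi z s)) t
     (sg * ((pt (pz f) z t * phi z t - pz f z t * pt phi z t) / (phi z t)^2))).
  { apply is_derive_scal.
    apply (is_derive_div (fun s => pz f z s) (fun s => phi z s)); [| |lra].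
    - exact (dt_is _ f (true :: nil) z t Sf (HP z)).
    - exact (dt_is _ phi nil z t Sph (HP z)). }
  assert (Tm := tmax _ t _ Ht Dt (fun s Hs => Htm s Hs)).
  rewrite (mixed eps T f z t Sf (HP z)) in Tm.
  set (RHS := fun z' => Xd z' / phi z' t
      + X z' * ((pz g z' t / phi z' t) / g z' t + (pz h z' t / phi z' t) / h z' t)
      - 2 * ((f z' t ^ 4 - (g z' t ^ 2 - h z' t ^ 2) ^ 2) / (f z' t * g z' t ^ 2 * h z' t ^ 2))).
  assert (HR : forall z', pt f z' t = RHS z').
  { intro z'. destruct (Hpos z') as (Q0 & _). rewrite (Hev z').
    rewrite (dss_eq _ phi f z' t Sph Sf (HP z') ltac:(lra)). unfold RHS, Xd, X, ds, Fp. reflexivity. }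
  assert (HD : pz (pt f) z t = Derive RHS z).
  { unfold pz at 1. apply Derive_ext. exact HR. }
  assert (DR : is_derive RHS z (DRf (f z t) (g z t) (h z t) (phi z t) (pz f z t) (pz (pz f) z t)
        (pz (pz (pz f)) z t) (pz g z t) (pz (pz g) z t) (pz h z t) (pz (pz h) z t)
        (pz phi z t) (pz (pz phi) z t))).
  { pose proof (dz_is _ f (true :: true :: nil) z t Sf (HP z)) as D3.
    pose proof (dz_is _ f (true :: nil) z t Sf (HP z)) as D2.
    pose proof (dz_is _ f nil z t Sf (HP z)) as D1.
    pose proof (dz_is _ g (true :: nil) z t Sg (HP z)) as G2.
    pose proof (dz_is _ g nil z t Sg (HP z)) as G1.
    pose proof (dz_is _ h (true :: nil) z t Sh (HP z)) as H2.
    pose proof (dz_is _ h nil z t Sh (HP z)) as H1.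
    pose proof (dz_is _ phi (true :: nil) z t Sph (HP z)) as E2'.
    pose proof (dz_is _ phi nil z t Sph (HP z)) as E1''.
    simpl in D3, D2, D1, G2, G1, H2, H1, E2', E1''.
    unfold RHS, Xd, X.
    auto_derive.
    - repeat split; try (eexists; eassumption); repeat apply Rmult_integral_contrapositive_currified; lra.
    - rewrite ?(is_derive_unique _ _ _ D3), ?(is_derive_unique _ _ _ D2), ?(is_derive_unique _ _ _ D1),
        ?(is_derive_unique _ _ _ G2), ?(is_derive_unique _ _ _ G1), ?(is_derive_unique _ _ _ H2),
        ?(is_derive_unique _ _ _ H1), ?(is_derive_unique _ _ _ E2'), ?(is_derive_unique _ _ _ E1'').
      unfold DRf, dFx, dFy, dFw. field. repeat split; lra. }
  rewrite HD, (is_derive_unique _ _ _ DR) in Tm.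
  rewrite (dss_eq _ phi f z t Sph Sf (HP z) ltac:(lra)), (dss_eq _ phi g z t Sph Sg (HP z) ltac:(lra)),
    (dss_eq _ phi h z t Sph Sh (HP z) ltac:(lra)) in Hphi.
  unfold Xdd in E2. unfold Xd in E1'.
  eapply (grad_final sg (f z t) (g z t) (h z t) (phi z t)); eauto.
Qed.

Lemma pz_per P f z t : smooth_on P f -> (forall z', P z' t) ->
  (forall z', f (z' + 2 * PI) t = f z' t) -> pz f (z + 2 * PI) t = pz f z t.
Proof.
  intros Sf HP Hp. unfold pz.
  rewrite <- (Derive_ext (fun z' => f (z' + 2 * PI) t) (fun z' => f z' t) z Hp).
  symmetry. apply is_derive_unique.
  pose proof (dz_is P f nil (z + 2 * PI) t Sf (HP _)) as D. simpl in D.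
  auto_derive.
  - eexists; eassumption.
  - rewrite (is_derive_unique _ _ _ D). ring.
Qed.

Lemma c2d_ds P phi f x y : smooth_on P phi -> smooth_on P f -> P x y -> 0 < phi x y ->
  continuity_2d_pt (fun u v => ds phi f u v) x y.
Proof.
  intros Sph Sf HP Hp. unfold ds.
  apply (continuity_2d_pt_mult (fun u v => pz f u v) (fun u v => / phi u v)).
  - exact (sm_c2d P f (true :: nil) x y Sf HP).
  - apply (continuity_2d_pt_inv phi); [exact (sm_c2d P phi nil x y Sph HP)|lra].
Qed.

Lemma grad_bound eps T phi f g h sg L :
  0 < eps -> (sg = 1 \/ sg = -1) ->
  smooth_on (PS eps T) phi -> smooth_on (PS eps T) f ->
  smooth_on (PS eps T) g -> smooth_on (PS eps T) h ->
  (forall z t, in_time T t -> phi (z + 2 * PI) t = phi z t /\ f (z + 2 * PI) t = f z t) ->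
  (forall z t, in_time T t -> 0 < phi z t /\ 0 < f z t /\ 0 < g z t /\ 0 < h z t) ->
  (forall z t, in_time T t -> EV phi f g h z t) ->
  (forall z t, in_time T t ->
     pt phi z t = phi z t * (dss phi f z t / f z t + dss phi g z t / g z t + dss phi h z t / h z t)) ->
  (forall z t, in_time T t -> f z t < 2 * g z t /\ g z t < 2 * f z t /\ f z t < 2 * h z t /\
     h z t < 2 * f z t /\ g z t < 2 * h z t /\ h z t < 2 * g z t) ->
  10 <= L -> (forall z, sg * ds phi f z 0 <= L) ->
  forall z t, in_time T t -> sg * ds phi f z t <= L.
Proof.
  intros He Hsg Sph Sf Sg Sh Hper Hpos Hev Hphi Hrat HL H0 z t Ht.
  apply (MP (fun z s => sg * ds phi f z s) t L); [apply Ht| | | |].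
  - intros x y Hx Hy. assert (Hy' : in_time T y) by (apply (in_time_le T t); auto).
    apply (continuity_2d_pt_mult (fun _ _ => sg)); [apply continuity_2d_pt_const|].
    apply (c2d_ds (PS eps T)); auto. apply in_time_PS; auto. apply (Hpos x y Hy').
  - intros z' y Hy. assert (Hy' : in_time T y) by (apply (in_time_le T t); auto).
    unfold ds. rewrite (pz_per (PS eps T) f z' y Sf (in_time_PS eps T y He Hy')).
    + rewrite (proj1 (Hper z' y Hy')). reflexivity.
    + intro; apply (Hper _ y Hy').
  - exact H0.
  - intros z' t' Ht' HLt Hmax.
    assert (Hin : in_time T t') by (apply (in_time_le T t); auto; lra).
    destruct (Hrat z' t' Hin) as (r1 & r2 & r3 & r4 & r5 & r6).
    apply (grad_local eps T phi f g h z' t' sg);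
      first [ assumption | lra | (apply in_time_PS; auto; fail) | (intro; apply Hpos; auto; fail)
            | (intro; apply Hev; auto; fail) | (apply Hphi; auto; fail)
            | (intro z''; apply Hmax; lra) | auto ].
Qed.

Lemma init_max eps T phi f : 0 < eps -> Rbar_lt 0 T ->
  smooth_on (PS eps T) phi -> smooth_on (PS eps T) f ->
  (forall z, phi (z + 2 * PI) 0 = phi z 0 /\ f (z + 2 * PI) 0 = f z 0) ->
  (forall z, 0 < phi z 0) ->
  exists z0, forall z, Rabs (ds phi f z 0) <= Rabs (ds phi f z0 0).
Proof.
  intros He HT Sph Sf Hper Hpos.
  assert (HP : forall z, PS eps T z 0) by (intro; split; auto; lra).
  pose proof PI_RGT_0.
  destruct (continuity_ab_maj (fun z => Rabs (ds phi f z 0)) 0 (2 * PI)) as [z0 [Hz0 _]].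
  - lra.
  - intros x _. apply (c2d_pt1 (fun u v => Rabs (ds phi f u v))).
    apply c2d_abs. apply (c2d_ds (PS eps T)); auto.
  - exists z0. intro z.
    destruct (per_red (fun u => Rabs (ds phi f u 0))) with (z := z) as [x [Hx E]].
    + intro u. unfold ds. rewrite (pz_per (PS eps T) f u 0 Sf HP).
      * rewrite (proj1 (Hper u)). reflexivity.
      * intro; apply Hper.
    + simpl in E. rewrite E. apply Hz0; auto.
Qed.

Lemma ratios A B C lam : 0 < A -> 0 < B -> 0 < C -> lam < 2 ->
  Rmax A (Rmax B C) <= lam * Rmin A (Rmin B C) ->
  A < 2 * B /\ B < 2 * A /\ A < 2 * C /\ C < 2 * A /\ B < 2 * C /\ C < 2 * B.
Proof.
  intros HA HB HC Hl H.
  assert (M1 : A <= Rmax A (Rmax B C) /\ B <= Rmax A (Rmax B C) /\ C <= Rmax A (Rmax B C))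
    by (unfold Rmax; repeat destruct Rle_dec; lra).
  assert (M2 : Rmin A (Rmin B C) <= A /\ Rmin A (Rmin B C) <= B /\ Rmin A (Rmin B C) <= C /\
     0 < Rmin A (Rmin B C))
    by (unfold Rmin; repeat destruct Rle_dec; lra).
  set (M := Rmax A (Rmax B C)) in *. set (m := Rmin A (Rmin B C)) in *.
  assert (M < 2 * m) by nra.
  lra.
Qed.

Lemma sqrt_ge (x y : R) : 0 <= x -> x * x <= y -> x <= sqrt y.
Proof.
  intros Hx Hy. rewrite <- (sqrt_square x) by auto. apply sqrt_le_1_alt; auto.
Qed.

Theorem lemma4p7 (phi a b c : R -> R -> R) (T : Rbar) (lambda : R) :
  RF_maximal phi a b c T ->
  1 < lambda < 2 ->
  (forall z, a z 0 <= b z 0 /\ b z 0 <= c z 0 /\ c z 0 <= lambda * a z 0) ->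
  exists C1 C2 C3 : R,
    0 < C1 /\ 0 < C2 /\ 0 < C3 /\
    (forall z t, in_time T t ->
       Rabs (ds phi a z t) <= C1 /\
       Rabs (ds phi b z t) <= C2 /\
       Rabs (ds phi c z t) <= C3) /\
    le_max_init C1 (280 * sqrt 3 / 9) phi a /\
    le_max_init C2 (4 * sqrt 57 / 3) phi b /\
    le_max_init C3 (10 * sqrt 93 / 9) phi c.
Proof.
  intros [Hsol _] [Hl1 Hl2] H0.
  destruct Hsol as (HT & (eps & He & Sph & Sa & Sb & Sc) & Hper & Hpos & Heq).
  change (smooth_on (PS eps T) phi) in Sph. change (smooth_on (PS eps T) a) in Sa.
  change (smooth_on (PS eps T) b) in Sb. change (smooth_on (PS eps T) c) in Sc.
  assert (H00 : in_time T 0) by (split; [lra|auto]).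
  pose proof (pinching eps T phi a b c lambda He Sph Sa Sb Sc Hper Hpos Heq Hl1 H0) as Hpin.
  assert (Hrat : forall z t, in_time T t ->
     a z t < 2 * b z t /\ b z t < 2 * a z t /\ a z t < 2 * c z t /\ c z t < 2 * a z t /\
     b z t < 2 * c z t /\ c z t < 2 * b z t).
  { intros z t Ht. destruct (Hpos z t Ht) as (_ & Pa & Pb & Pc).
    apply (ratios _ _ _ lambda); auto. apply Hpin; auto. }
  assert (HEV : forall z t, in_time T t ->
     EV phi a b c z t /\ EV phi b a c z t /\ EV phi c a b z t).
  { intros z t Ht. destruct (Hpos z t Ht) as (_ & Pa & Pb & Pc).
    destruct (EVs phi a b c z t Pa Pb Pc (Heq z t Ht)) as (E1 & E2 & E3 & E4 & E5 & E6). auto. }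
  assert (Hph : forall z t, in_time T t ->
     pt phi z t = phi z t * (dss phi a z t / a z t + dss phi b z t / b z t + dss phi c z t / c z t)).
  { intros z t Ht. apply (Heq z t Ht). }
  assert (Gen : forall f g h, smooth_on (PS eps T) f -> smooth_on (PS eps T) g -> smooth_on (PS eps T) h ->
     (forall z t, in_time T t -> phi (z + 2 * PI) t = phi z t /\ f (z + 2 * PI) t = f z t) ->
     (forall z t, in_time T t -> 0 < phi z t /\ 0 < f z t /\ 0 < g z t /\ 0 < h z t) ->
     (forall z t, in_time T t -> EV phi f g h z t) ->
     (forall z t, in_time T t ->
       pt phi z t = phi z t * (dss phi f z t / f z t + dss phi g z t / g z t + dss phi h z t / h z t)) ->
     (forall z t, in_time T t -> f z t < 2 * g z t /\ g z t < 2 * f z t /\ f z t < 2 * h z t /\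
       h z t < 2 * f z t /\ g z t < 2 * h z t /\ h z t < 2 * g z t) ->
     exists C, 10 <= C /\ (forall z t, in_time T t -> Rabs (ds phi f z t) <= C) /\
       (C <= 10 \/ exists z0, C <= Rabs (ds phi f z0 0))).
  { intros f g h Sf Sg Sh Hpf Hpf' Hevf Hphf Hratf.
    destruct (init_max eps T phi f He HT Sph Sf) as [z0 Hz0].
    { intro z; apply Hpf; auto. } { intro z; apply Hpf'; auto. }
    set (C := Rmax 10 (Rabs (ds phi f z0 0))).
    assert (HC : 10 <= C) by apply Rmax_l.
    assert (HC' : Rabs (ds phi f z0 0) <= C) by apply Rmax_r.
    exists C; split; auto. split.
    - intros z t Ht. apply Rabs_le. split.
      + assert (- ds phi f z t <= C); [|lra].
        replace (- ds phi f z t) with (-1 * ds phi f z t) by ring.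
        apply (grad_bound eps T phi f g h (-1) C); auto.
        intro z'. specialize (Hz0 z'). pose proof (Rabs_maj2 (ds phi f z' 0)). lra.
      + replace (ds phi f z t) with (1 * ds phi f z t) by ring.
        apply (grad_bound eps T phi f g h 1 C); auto.
        intro z'. specialize (Hz0 z').
        pose proof (Rle_abs (ds phi f z' 0)). lra.
    - unfold C, Rmax. destruct Rle_dec; [right; exists z0; lra | left; lra]. }
  destruct (Gen a b c Sa Sb Sc) as [C1 (HC1 & B1 & I1)].
  { intros z t Ht; destruct (Hper z t Ht) as (? & ? & ? & ?); auto. }
  { intros z t Ht; apply Hpos; auto. }
  { intros z t Ht; apply HEV; auto. }
  { exact Hph. }
  { exact Hrat. }
  destruct (Gen b a c Sb Sa Sc) as [C2 (HC2 & B2 & I2)].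
  { intros z t Ht; destruct (Hper z t Ht) as (? & ? & ? & ?); auto. }
  { intros z t Ht; destruct (Hpos z t Ht) as (? & ? & ? & ?); auto. }
  { intros z t Ht; apply HEV; auto. }
  { intros z t Ht; rewrite Hph by auto; ring. }
  { intros z t Ht; destruct (Hrat z t Ht) as (? & ? & ? & ? & ? & ?); repeat split; auto. }
  destruct (Gen c a b Sc Sa Sb) as [C3 (HC3 & B3 & I3)].
  { intros z t Ht; destruct (Hper z t Ht) as (? & ? & ? & ?); auto. }
  { intros z t Ht; destruct (Hpos z t Ht) as (? & ? & ? & ?); auto. }
  { intros z t Ht; apply HEV; auto. }
  { intros z t Ht; rewrite Hph by auto; ring. }
  { intros z t Ht; destruct (Hrat z t Ht) as (? & ? & ? & ? & ? & ?); repeat split; auto. }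
  exists C1, C2, C3.
  split; [lra|]. split; [lra|]. split; [lra|].
  split; [intros z t Ht; repeat split; auto|].
  assert (S3 : 1 <= sqrt 3) by (apply sqrt_ge; lra).
  assert (S57 : 7.5 <= sqrt 57) by (apply sqrt_ge; lra).
  assert (S93 : 9 <= sqrt 93) by (apply sqrt_ge; lra).
  unfold le_max_init. split; [|split].
  - destruct I1 as [I1|I1]; [left; lra|right; auto].
  - destruct I2 as [I2|I2]; [left; lra|right; auto].
  - destruct I3 as [I3|I3]; [left; lra|right; auto].
Qed.
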